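(* If the moment matrix admits the Gauss–Borel factorization $g=S^{-1}\bar S$, then $S\Upsilon_1S^{-1}=\bar S\Upsilon_2^\top\bar S^{-1}$.
   Context: $g=(g_{i,j})_{i,j\ge0}$ with $g_{i,j}=\int x^{k_1(i)+k_2(j)}w_{1,a_1(i)}(x)w_{2,a_2(j)}(x)d\mu(x)$, where $\mu$ is a finite Borel measure on an interval, $w_{1,a}$ ($a\le p_1$), $w_{2,b}$ ($b\le p_2$) are weights with finite moments, and for compositions $\vec n_\ell\in\mathbb N^{p_\ell}$ each $i\in\mathbb Z_+$ is uniquely $i=q|\vec n_\ell|+n_{\ell,1}+\dots+n_{\ell,a-1}+r$, $0\le r<n_{\ell,a}$, $a_\ell(i)=a$, $k_\ell(i)=qn_{\ell,a}+r$. Gauss–Borel factorization: $S$ semi-infinite lower triangular with unit diagonal, $\bar S$ semi-infinite upper triangular with nonzero diagonal. $e_{\ell,a}(k)=e_i$ for the unique $i$ with $a_\ell(i)=a,k_\ell(i)=k$; $\Lambda_{\ell,a}=\sum_ke_{\ell,a}(k)e_{\ell,a}(k+1)^\top$; $\Upsilon_\ell=\sum_a\Lambda_{\ell,a}$. *)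

(* Defs.v *)
From HB Require Import structures.
From mathcomp Require Import all_boot all_order all_algebra.
From mathcomp Require Import all_classical all_reals all_analysis.
Set Implicit Arguments. Unset Strict Implicit. Unset Printing Implicit Defensive.
Import Order.TTheory GRing.Theory Num.Theory.
Local Open Scope ring_scope.

(* Semi-infinite matrices, indexed by nat x nat (rows/columns start at 0). *)
Definition smx (R : Type) := nat -> nat -> R.

Section SemiInfinite.
Variable R : realType.

(* Matrix product: (A B)_{ij} = sum_k A_{ik} B_{kj}, as a (real) series.
   In every product used below only finitely many terms are nonzero. *)
Definition smul (A B : smx R) : smx R :=
  fun i j => limn (fun N => \sum_(k < N) (A i k * B k j)).

Definition sid : smx R := fun i j => if i == j then 1 else 0.

Definition strm (A : smx R) : smx R := fun i j => A j i.

Definition lower_unitriangular (A : smx R) : Prop :=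
  forall i j, (i <= j)%N -> A i j = (if i == j then 1 else 0).

Definition lower_triangular (A : smx R) : Prop :=
  forall i j, (i < j)%N -> A i j = 0.

Definition upper_triangular (A : smx R) : Prop :=
  forall i j, (j < i)%N -> A i j = 0.

Definition upper_nonzero_diag (A : smx R) : Prop :=
  upper_triangular A /\ forall i, A i i != 0.
End SemiInfinite.

(* Compositions n = (n_0, ..., n_{p-1}) of positive integers (0-based
   indices a < p; the paper uses 1-based a = 1..p). *)
Definition composition (p : nat) (n : nat -> nat) : Prop :=
  (0 < p)%N /\ forall a, (a < p)%N -> (0 < n a)%N.

Definition csize (p : nat) (n : nat -> nat) : nat := \sum_(b < p) n b.

(* i = q|n| + n_0 + ... + n_{a-1} + r with 0 <= r < n_a *)
Definition aidx (p : nat) (n : nat -> nat) (i : nat) : nat :=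
  find (fun a => (i %% csize p n < \sum_(c < a.+1) n c)%N) (iota 0 p).

Definition ridx (p : nat) (n : nat -> nat) (i : nat) : nat :=
  (i %% csize p n - \sum_(c < aidx p n i) n c)%N.

Definition kidx (p : nat) (n : nat -> nat) (i : nat) : nat :=
  (i %/ csize p n * n (aidx p n i) + ridx p n i)%N.

Section Shifts.
Variable R : realType.

(* e_{a}(k) = e_i for the unique i with a(i) = a, k(i) = k; hence
   Lambda_a = sum_k e_a(k) e_a(k+1)^T has (i,j)-entry 1 iff
   a(i) = a(j) = a and k(j) = k(i) + 1, and 0 otherwise. *)
Definition Lambda (p : nat) (n : nat -> nat) (a : nat) : smx R :=
  fun i j => if [&& aidx p n i == a, aidx p n j == a &
                    kidx p n j == (kidx p n i).+1] then 1 else 0.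

Definition Upsilon (p : nat) (n : nat -> nat) : smx R :=
  fun i j => \sum_(a < p) Lambda p n a i j.

Definition moment_matrix (mu : {measure set R -> \bar R}) (D : set R)
  (p1 p2 : nat) (n1 n2 : nat -> nat) (w1 w2 : nat -> R -> R) : smx R :=
  fun i j => Rintegral mu D (fun x =>
     x ^+ (kidx p1 n1 i + kidx p2 n2 j) * w1 (aidx p1 n1 i) x
       * w2 (aidx p2 n2 j) x).
End Shifts.

(* Main.v *)
Require Import Defs.
From HB Require Import structures.
From mathcomp Require Import all_boot all_order all_algebra.
From mathcomp Require Import all_classical all_reals all_analysis.
From mathcomp Require Import zify.
Set Implicit Arguments. Unset Strict Implicit.
Import Order.TTheory GRing.Theory Num.Theory.

Section Idx.
Variables (p : nat) (n : nat -> nat).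
Hypothesis Hn : composition p n.

Definition pref a := (\sum_(c < a) n c)%N.

Lemma prefS a : pref a.+1 = (pref a + n a)%N.
Proof. by rewrite /pref big_ord_recr. Qed.

Lemma pref_mono a b : (a <= b)%N -> (pref a <= pref b)%N.
Proof.
elim: b => [|b IH]; first by rewrite leqn0 => /eqP ->.
rewrite leq_eqVlt => /orP [/eqP -> //| hab].
rewrite prefS; apply: leq_trans (IH hab) (leq_addr _ _).
Qed.

Lemma N_gt0 : (0 < csize p n)%N.
Proof.
case: Hn => hp hpos.
have h1 : (pref 1 <= pref p)%N by apply: pref_mono.
have : (0 < pref 1)%N by rewrite prefS /pref big_ord0 add0n; apply: hpos.
rewrite /csize; move: h1; rewrite /pref; lia.
Qed.

Lemma aidx_spec i : [/\ (aidx p n i < p)%N, (pref (aidx p n i) <= i %% csize p n)%N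
   & (i %% csize p n < pref (aidx p n i).+1)%N].
Proof.
have hx : (i %% csize p n < csize p n)%N := ltn_pmod _ N_gt0.
case: Hn => hp hpos.
rewrite /aidx.
set P := (fun a => _).
have hhas : has P (iota 0 p).
  apply/hasP; exists p.-1; first by rewrite mem_iota /= add0n prednK.
  by rewrite /P prednK.
have hlt : (find P (iota 0 p) < p)%N.
  by rewrite -[p in (_ < p)%N](size_iota 0 p) -has_find.
split => //.
- case e: (find P (iota 0 p)) => [|a]; first by rewrite /pref big_ord0.
  have := @before_find _ 0%N P (iota 0 p) a.
  rewrite e ltnSn nth_iota; last by apply: ltnW; rewrite -e.
  by rewrite /P add0n => /(_ isT) /negbT; rewrite -leqNgt.
- by have := nth_find 0%N hhas; rewrite nth_iota.
Qed.

Lemma aidx_lt i : (aidx p n i < p)%N.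
Proof. by case: (aidx_spec i). Qed.

Lemma aidx_eq i a r : (a < p)%N -> (r < n a)%N -> i %% csize p n = (pref a + r)%N ->
  aidx p n i = a.
Proof.
move=> ha hr hx; have [h1 h2 h3] := aidx_spec i; rewrite hx in h2 h3.
move: h1 h2 h3; set b := aidx p n i => h1 h2 h3.
case: (ltngtP b a) => hb //.
- have := pref_mono hb; rewrite prefS in h3 *; lia.
- have := pref_mono hb; rewrite prefS in h2 *; lia.
Qed.

Lemma ridx_lt i : (ridx p n i < n (aidx p n i))%N.
Proof. have [h1 h2 h3] := aidx_spec i; rewrite /ridx; rewrite prefS in h3; rewrite /pref in h2 h3; lia. Qed.

Lemma idx_decomp i : i = (i %/ csize p n * csize p n + pref (aidx p n i) + ridx p n i)%N.
Proof.
have [h1 h2 h3] := aidx_spec i; rewrite /ridx -/(pref _).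
rewrite -addnA subnKC //; exact: divn_eq.
Qed.

Definition encode q a r := (q * csize p n + pref a + r)%N.

Lemma encode_spec q a r : (a < p)%N -> (r < n a)%N ->
  [/\ aidx p n (encode q a r) = a, ridx p n (encode q a r) = r
    & encode q a r %/ csize p n = q].
Proof.
move=> ha hr.
have hlt : (pref a + r < csize p n)%N.
  have := pref_mono ha; rewrite prefS /csize -/(pref p); lia.
have hm : encode q a r %% csize p n = (pref a + r)%N.
  by rewrite /encode -addnA modnMDl modn_small.
have ha' := aidx_eq ha hr hm.
split => //.
- by rewrite /ridx ha' hm -/(pref a) addKn.
- by rewrite /encode -addnA divnMDl ?N_gt0 // divn_small // addn0.
Qed.

Lemma idx_inj i j : aidx p n i = aidx p n j -> kidx p n i = kidx p n j -> i = j.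
Proof.
move=> ha hk.
have hi := ridx_lt i; have hj := ridx_lt j.
move: hk; rewrite /kidx -ha => hk.
have hpos : (0 < n (aidx p n i))%N by case: Hn => _; apply; apply: aidx_lt.
have hq : i %/ csize p n = j %/ csize p n.
  have e1 := congr1 (fun x => x %/ n (aidx p n i))%N hk; move: e1 => /=.
  have hj2 : (ridx p n j < n (aidx p n i))%N by rewrite ha.
  by rewrite !divnMDl // (divn_small hi) (divn_small hj2) !addn0.
have hr : ridx p n i = ridx p n j by move: hk; rewrite hq; lia.
by rewrite (idx_decomp i) (idx_decomp j) hq hr ha.
Qed.

Definition sig i := encode ((kidx p n i).+1 %/ n (aidx p n i)) (aidx p n i)
                           ((kidx p n i).+1 %% n (aidx p n i)).

Lemma sig_spec i : aidx p n (sig i) = aidx p n i /\ kidx p n (sig i) = (kidx p n i).+1.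
Proof.
have hpos : (0 < n (aidx p n i))%N by case: Hn => _; apply; apply: aidx_lt.
have [e1 e2 e3] := encode_spec ((kidx p n i).+1 %/ n (aidx p n i))
   (aidx_lt i) (ltn_pmod (kidx p n i).+1 hpos).
split => //.
by rewrite /kidx -/(sig i) e1 e2 e3 -divn_eq.
Qed.

Lemma Ups_eq (R : realType) i j :
  Upsilon R p n i j = if j == sig i then 1%R else 0%R.
Proof.
rewrite /Upsilon (bigD1 (Ordinal (aidx_lt i))) //= big1 ?GRing.addr0.
- rewrite /Lambda eqxx /=.
  have -> : (aidx p n j == aidx p n i) && (kidx p n j == (kidx p n i).+1) = (j == sig i).
    have [s1 s2] := sig_spec i.
    apply/idP/idP.
    + by move/andP => [/eqP h1 /eqP h2]; apply/eqP; apply: idx_inj; rewrite ?s1 ?s2.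
    + by move/eqP ->; rewrite s1 s2 !eqxx.
  by [].
- move=> a ha; rewrite /Lambda.
  have -> : (aidx p n i == a) = false.
    apply/negbTE; apply: contra ha => /eqP e; apply/eqP/val_inj; by rewrite /= e.
  by [].
Qed.

End Idx.
Local Open Scope ring_scope.
Local Open Scope classical_set_scope.

Lemma sum_widen (R : realType) (f : nat -> R) M K : (M <= K)%N ->
  (forall k, (M <= k)%N -> f k = 0) -> \sum_(k < K) f k = \sum_(k < M) f k.
Proof.
move=> hMK hf.
rewrite -!(big_mkord xpredT) (@big_cat_nat _ _ _ M 0 K _ _ (leq0n M) hMK) /=.
rewrite [X in _ + X]big1_seq ?addr0 // => k /andP[_].
by rewrite mem_iota => /andP[hk _]; exact: hf.
Qed.

Lemma smul_fin (R : realType) (A B : smx R) i j M :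
  (forall k, (M <= k)%N -> A i k * B k j = 0) ->
  smul A B i j = \sum_(k < M) A i k * B k j.
Proof.
move=> H; rewrite /smul.
have h : (fun N => \sum_(k < N) A i k * B k j) @ \oo --> \sum_(k < M) A i k * B k j.
  apply: cvg_near_cst; exists M => // K /= hK; exact: (@sum_widen _ (fun k => A i k * B k j) _ _ hK H).
exact (norm_cvg_lim h).
Qed.

Lemma pick_sum (R : realType) (F : nat -> R) (s K : nat) :
  \sum_(k < K) F k * (if (k : nat) == s then 1 else 0) = if (s < K)%N then F s else 0.
Proof.
case: ifP => hs.
- rewrite (bigD1 (Ordinal hs)) //= eqxx mulr1 big1 ?addr0 // => k hk.
  have -> : (k == s :> nat) = false.
    apply/negbTE; apply: contra hk => /eqP e; apply/eqP/val_inj; by rewrite /= e.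
  by rewrite mulr0.
- rewrite big1 // => k _.
  have -> : (k == s :> nat) = false.
    apply/negbTE; apply/eqP => e; move: hs; by rewrite -e ltn_ord.
  by rewrite mulr0.
Qed.
Unset Implicit Arguments. Set Strict Implicit.

Theorem proposition2p13 (R : realType)
  (mu : {finite_measure set R -> \bar R}) (I : interval R)
  (p1 p2 : nat) (n1 n2 : nat -> nat) (w1 w2 : nat -> R -> R)
  (Hn1 : composition p1 n1) (Hn2 : composition p2 n2)
  (Hw1 : forall a, (a < p1)%N ->
     measurable_fun [set` I] (w1 a) /\ (forall x, x \in I -> 0 <= w1 a x))
  (Hw2 : forall b, (b < p2)%N ->
     measurable_fun [set` I] (w2 b) /\ (forall x, x \in I -> 0 <= w2 b x))
  (Hmom : forall a b m, (a < p1)%N -> (b < p2)%N ->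
     mu.-integrable [set` I] (fun x => (x ^+ m * w1 a x * w2 b x)%:E))
  (S Sinv Sb Sbinv : smx R)
  (HS : lower_unitriangular S)
  (HSinv : lower_triangular Sinv /\ smul S Sinv = sid R /\ smul Sinv S = sid R)
  (HSb : upper_nonzero_diag Sb)
  (HSbinv : upper_triangular Sbinv /\ smul Sb Sbinv = sid R
            /\ smul Sbinv Sb = sid R)
  (Hfact : moment_matrix mu [set` I] p1 p2 n1 n2 w1 w2 = smul Sinv Sb) :
  smul (smul S (Upsilon R p1 n1)) Sinv
  = smul (smul Sb (strm (Upsilon R p2 n2))) Sbinv.
Proof.
case: HSinv => HSinvl [HSSinv _].
case: HSb => HSbu _.
case: HSbinv => HSbinvu [HSbSbinv _].
set g := moment_matrix mu [set` I] p1 p2 n1 n2 w1 w2 in Hfact.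
have S0 : forall i k, (i < k)%N -> S i k = 0.
  move=> i k hik; rewrite HS ?(ltnW hik) //; by rewrite ltn_eqF.
have F1 : forall i j, \sum_(k < i.+1) S i k * Sinv k j = sid R i j.
  move=> i j; rewrite -HSSinv (smul_fin (M := i.+1)) // => k hk.
  by rewrite S0 ?mul0r.
have F2 : forall i j, \sum_(k < j.+1) Sb i k * Sbinv k j = sid R i j.
  move=> i j; rewrite -HSbSbinv (smul_fin (M := j.+1)) // => k hk.
  by rewrite HSbinvu ?mulr0.
have F3 : forall i j, g i j = \sum_(k < i.+1) Sinv i k * Sb k j.
  move=> i j; rewrite Hfact (smul_fin (M := i.+1)) // => k hk.
  by rewrite HSinvl ?mul0r.
have L1 : forall m j, Sinv m j = \sum_(l < j.+1) g m l * Sbinv l j.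
  move=> m j.
  under eq_bigr => l _ do rewrite F3 mulr_suml.
  rewrite exchange_big /=.
  under eq_bigr => t _ do rewrite -(eq_bigr _ (fun l _ => mulrA _ _ _)) -mulr_sumr F2.
  rewrite /sid /= (pick_sum (fun t => Sinv m t)); case: ifP => // hjm.
  by rewrite HSinvl // ltnNge -ltnS hjm.
have L2 : forall i nn, \sum_(k < i.+1) S i k * g k nn = Sb i nn.
  move=> i nn.
  have -> : \sum_(k < i.+1) S i k * g k nn
          = \sum_(k < i.+1) \sum_(t < i.+1) S i k * (Sinv k t * Sb t nn).
    apply: eq_bigr => k _; rewrite F3 mulr_sumr.
    rewrite (@sum_widen _ (fun t => S i k * (Sinv k t * Sb t nn)) k.+1 i.+1) //.
    by move=> t ht; rewrite HSinvl ?mul0r ?mulr0.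
  rewrite exchange_big /=.
  under eq_bigr => t _ do rewrite (eq_bigr _ (fun k _ => mulrA _ _ _)) -mulr_suml F1.
  under eq_bigr => t _ do rewrite /sid eq_sym mulrC.
  by rewrite (pick_sum (fun t => Sb t nn)) ltnSn.
have Mg : forall k l, g (sig p1 n1 k) l = g k (sig p2 n2 l).
  move=> k l; rewrite /g /moment_matrix.
  have [a1 k1] := sig_spec Hn1 k; have [a2 k2] := sig_spec Hn2 l.
  by rewrite a1 k1 a2 k2 addSn addnS.
apply/funext => i; apply/funext => j.
pose B := (\max_(k < i.+1) (sig p1 n1 k).+1)%N.
have hB : forall k, (k < i.+1)%N -> (sig p1 n1 k < B)%N.
  move=> k hk; have := @leq_bigmax _ (fun k : 'I_i.+1 => (sig p1 n1 k).+1) (Ordinal hk).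
  by rewrite /B.
have T : forall m, smul S (Upsilon R p1 n1) i m
    = \sum_(k < i.+1) S i k * (if m == sig p1 n1 k then 1 else 0).
  move=> m; rewrite (smul_fin (M := i.+1)) => [|k hk]; last by rewrite S0 ?mul0r.
  by apply: eq_bigr => k _; rewrite (Ups_eq Hn1).
rewrite (smul_fin (M := B)); last first.
  move=> m hm; rewrite T big1 ?mul0r // => k _.
  have -> : (m == sig p1 n1 k) = false.
    apply/negbTE; apply/eqP => e; move: hm; rewrite e leqNgt hB //.
  by rewrite mulr0.
have -> : \sum_(m < B) smul S (Upsilon R p1 n1) i m * Sinv m j
        = \sum_(k < i.+1) S i k * Sinv (sig p1 n1 k) j.
  under eq_bigr => m _ do rewrite T mulr_suml.
  rewrite exchange_big /=; apply: eq_bigr => k _.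
  have := pick_sum (fun m => S i k * Sinv m j) (sig p1 n1 k) B.
  rewrite hB // => <-; apply: eq_bigr => m _.
  by case: eqP => _; rewrite ?mulr1 ?mulr0 ?mul0r //; rewrite mulr1.
under eq_bigr => k _ do rewrite L1 mulr_sumr.
rewrite exchange_big /=.
under eq_bigr => l _ do rewrite (eq_bigr _ (fun k _ => mulrA _ _ _)) -mulr_suml.
under eq_bigr => l _ do (under eq_bigr => k _ do rewrite Mg).
under eq_bigr => l _ do rewrite L2.
rewrite (smul_fin (M := j.+1)); last by move=> l hl; rewrite HSbinvu ?mulr0.
apply: eq_bigr => l _; congr (_ * _).
rewrite (smul_fin (M := (sig p2 n2 l).+1)).
  under eq_bigr => k _ do rewrite /strm (Ups_eq Hn2).
  by rewrite pick_sum ltnSn.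
move=> k hk; rewrite /strm (Ups_eq Hn2).
have -> : (k == sig p2 n2 l) = false.
  by apply/negbTE; apply/eqP => e; move: hk; rewrite e ltnn.
by rewrite mulr0.
Qed.
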